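(* Let $\phi_1,\phi_2$ be two $n$-qubit stabilizer states. There exists a Clifford unitary $C$ such that $C\ket{\phi_1}=\ket{0^n}$ and $C\ket{\phi_2}\propto\ket{1^a0^b+^{n-a-b}}$ for some $a\in\{0,1\}$ and $0\le b\le n$.
   Context: An $n$-qubit stabilizer state is a state of the form $C\ket{0^n}$ with $C$ an $n$-qubit Clifford unitary. $\ket{+}=2^{-1/2}(\ket{0}+\ket{1})$, and $\ket{1^a0^b+^{c}}$ denotes the product state $\ket{1}^{\otimes a}\otimes\ket{0}^{\otimes b}\otimes\ket{+}^{\otimes c}$. The symbol $\propto$ means equality up to a nonzero scalar factor. *)

(* Defs.v *)
(* Complex amplitudes live in an arbitrary numClosedFieldType C
   (e.g. algC, or R[i] for a real closed / real field R). *)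
From mathcomp Require Import all_boot all_order all_algebra.
Import Order.TTheory GRing.Theory Num.Theory.
Local Open Scope ring_scope.

Definition bits (n : nat) := {ffun 'I_n -> bool}.
Definition bxor {n : nat} (x y : bits n) : bits n := [ffun j => x j (+) y j].
Definition bzero (n : nat) : bits n := [ffun _ => false].

Definition qstate (C : numClosedFieldType) (n : nat) := bits n -> C.
Definition qop (C : numClosedFieldType) (n : nat) := bits n -> bits n -> C.

Definition opmul {C : numClosedFieldType} {n : nat} (A B : qop C n) : qop C n :=
  fun x y => \sum_z A x z * B z y.
Definition opadj {C : numClosedFieldType} {n : nat} (A : qop C n) : qop C n :=
  fun x y => (A y x)^*.
Definition opid (C : numClosedFieldType) (n : nat) : qop C n :=
  fun x y => (x == y)%:R.
Definition opapp {C : numClosedFieldType} {n : nat} (A : qop C n) (psi : qstate C n)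
  : qstate C n := fun x => \sum_y A x y * psi y.
Definition op_eq {C : numClosedFieldType} {n : nat} (A B : qop C n) : Prop :=
  forall x y, A x y = B x y.

Definition unitary {C : numClosedFieldType} {n : nat} (U : qop C n) : Prop :=
  op_eq (opmul U (opadj U)) (opid C n) /\ op_eq (opmul (opadj U) U) (opid C n).

(* Pauli group element i^k X^v Z^w :  |y> |-> i^k (-1)^(w.y) |y xor v> *)
Definition pauli (C : numClosedFieldType) {n : nat} (k : nat) (v w : bits n) : qop C n :=
  fun x y => 'i ^+ k * (x == bxor y v)%:R * (-1) ^+ (\sum_(j < n) (w j && y j))%N.

Definition clifford {C : numClosedFieldType} {n : nat} (U : qop C n) : Prop :=
  unitary U /\
  forall (k : nat) (v w : bits n), exists (k' : nat) (v' w' : bits n),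
    op_eq (opmul (opmul U (pauli C k v w)) (opadj U)) (pauli C k' v' w').

Definition basis_state (C : numClosedFieldType) {n : nat} (e : bits n) : qstate C n :=
  fun x => (x == e)%:R.

Definition stabilizer_state {C : numClosedFieldType} {n : nat} (psi : qstate C n) : Prop :=
  exists U : qop C n, clifford U /\ forall x, psi x = opapp U (basis_state C (bzero n)) x.

(* |1^a 0^b +^(n-a-b)> : qubits j < a are |1>, a <= j < a+b are |0>, rest |+> *)
Definition prod_state (C : numClosedFieldType) {n : nat} (a b : nat) : qstate C n :=
  fun x => \prod_(j < n)
    (if (j < a)%N then (x j : nat)%:R
     else if (j < a + b)%N then (~~ x j : nat)%:R
     else (sqrtC (2 : C))^-1).

(* Main.v *)
Require Import Defs.
From mathcomp Require Import all_boot all_order all_algebra ring zify.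
From Stdlib Require Import FunctionalExtensionality.
Import GRing.Theory Num.Theory.
Local Open Scope ring_scope.

Section Main.
Variable C : numClosedFieldType.
Variable n : nat.
Local Notation bits := (bits n).
Local Notation qop := (qop C n).
Local Notation qstate := (qstate C n).

Lemma funext2 (A B : qop) : op_eq A B -> A = B.
Proof. move=> h; do 2 (apply: functional_extensionality => ?); exact: h. Qed.

Lemma sum_delta (x : bits) (F : bits -> C) : \sum_z (x == z)%:R * F z = F x.
Proof.
rewrite (bigD1 x) //= eqxx mul1r big1 ?addr0 // => z /negbTE.
by rewrite eq_sym => ->; rewrite mul0r.
Qed.

Lemma sum_delta' (x : bits) (F : bits -> C) : \sum_z F z * (z == x)%:R = F x.
Proof.
rewrite (bigD1 x) //= eqxx mulr1 big1 ?addr0 // => z /negbTE ->.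
by rewrite mulr0.
Qed.

Lemma sum_deltaC (x : bits) (F : bits -> C) : \sum_z (z == x)%:R * F z = F x.
Proof. by under eq_bigr do rewrite eq_sym; rewrite sum_delta. Qed.

Lemma opmulA (A B D : qop) : opmul (opmul A B) D = opmul A (opmul B D).
Proof.
apply: funext2 => x y; rewrite /opmul.
under eq_bigr do rewrite mulr_suml.
rewrite exchange_big /=; apply: eq_bigr => z _.
by rewrite mulr_sumr; apply: eq_bigr => u _; rewrite mulrA.
Qed.

Lemma opappM (A B : qop) (psi : qstate) : opapp (opmul A B) psi = opapp A (opapp B psi).
Proof.
apply: functional_extensionality => x; rewrite /opapp /opmul.
under eq_bigr do rewrite mulr_suml.
rewrite exchange_big /=; apply: eq_bigr => z _.
by rewrite mulr_sumr; apply: eq_bigr => u _; rewrite mulrA.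
Qed.

Lemma opmul1l (A : qop) : opmul (opid C n) A = A.
Proof. by apply: funext2 => x y; rewrite /opmul /opid sum_delta. Qed.

Lemma opmul1r (A : qop) : opmul A (opid C n) = A.
Proof.
apply: funext2 => x y; rewrite /opmul /opid.
by rewrite sum_delta'.
Qed.

Lemma opapp1 (psi : qstate) : opapp (opid C n) psi = psi.
Proof. by apply: functional_extensionality => x; rewrite /opapp /opid sum_delta. Qed.

Lemma opadjK (A : qop) : opadj (opadj A) = A.
Proof. by apply: funext2 => x y; rewrite /opadj conjCK. Qed.

Lemma opadjM (A B : qop) : opadj (opmul A B) = opmul (opadj B) (opadj A).
Proof.
apply: funext2 => x y; rewrite /opadj /opmul rmorph_sum /=.
by apply: eq_bigr => z _; rewrite rmorphM /= mulrC.
Qed.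

Lemma unitary_adj (U : qop) : unitary U -> opmul (opadj U) U = opid C n.
Proof. by case=> _ h; apply: funext2. Qed.

Lemma unitary_adj' (U : qop) : unitary U -> opmul U (opadj U) = opid C n.
Proof. by case=> h _; apply: funext2. Qed.

Lemma unitary_mul (U V : qop) : unitary U -> unitary V -> unitary (opmul U V).
Proof.
move=> hU hV; split => x y; rewrite opadjM.
  by rewrite opmulA -(opmulA V) unitary_adj' // opmul1l unitary_adj'.
by rewrite opmulA -(opmulA (opadj U)) unitary_adj // opmul1l unitary_adj.
Qed.

Lemma clifford_mul (U V : qop) : clifford U -> clifford V -> clifford (opmul U V).
Proof.
move=> [uU hU] [uV hV]; split; first exact: unitary_mul.
move=> k v w; have [k1 [v1 [w1 /funext2 e1]]] := hV k v w.
have [k2 [v2 [w2 /funext2 e2]]] := hU k1 v1 w1.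
exists k2, v2, w2 => x y.
rewrite opadjM.
have -> : opmul (opmul (opmul U V) (pauli C k v w)) (opmul (opadj V) (opadj U))
  = opmul (opmul U (opmul (opmul V (pauli C k v w)) (opadj V))) (opadj U)
  by rewrite !opmulA.
by rewrite e1 e2.
Qed.


Lemma bxorC (x y : bits) : bxor x y = bxor y x.
Proof. by apply/ffunP => j; rewrite !ffunE addbC. Qed.
Lemma bxorA (x y z : bits) : bxor x (bxor y z) = bxor (bxor x y) z.
Proof. by apply/ffunP => j; rewrite !ffunE addbA. Qed.
Lemma bxor0 (x : bits) : bxor x (bzero n) = x.
Proof. by apply/ffunP => j; rewrite !ffunE addbF. Qed.
Lemma bxor0l (x : bits) : bxor (bzero n) x = x.
Proof. by apply/ffunP => j; rewrite !ffunE. Qed.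
Lemma bxorK (x v : bits) : bxor (bxor x v) v = x.
Proof. by apply/ffunP => j; rewrite !ffunE -addbA addbb addbF. Qed.
Lemma bxorxx (x : bits) : bxor x x = bzero n.
Proof. by apply/ffunP => j; rewrite !ffunE addbb. Qed.
Lemma bxor_eq (x y v : bits) : (x == bxor y v) = (bxor x v == y).
Proof.
apply/eqP/eqP => [->|<-]; first by rewrite bxorK. by rewrite bxorK.
Qed.

Definition dot (w y : bits) : nat := (\sum_(j < n) (w j && y j))%N.

Lemma pauliE k v w x y :
  pauli C k v w x y = 'i ^+ k * (x == bxor y v)%:R * (-1) ^+ dot w y.
Proof. by []. Qed.

Lemma odd_dot_xor w a b : odd (dot w (bxor a b)) = odd (dot w a) (+) odd (dot w b).
Proof.
rewrite /dot; apply: (big_rec3 (fun i1 i2 i3 => odd i1 = odd i2 (+) odd i3)) => //.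
move=> j y1 y2 y3 _ h; rewrite ffunE !oddD h.
by case: (w j); case: (a j); case: (b j); case: (odd y2); case: (odd y3).
Qed.

Lemma dotC w y : dot w y = dot y w.
Proof. by apply: eq_bigr => j _; rewrite andbC. Qed.

Lemma sign_xor w a b :
  (-1 : C) ^+ dot w (bxor a b) = (-1) ^+ dot w a * (-1) ^+ dot w b.
Proof. by rewrite -[LHS]signr_odd odd_dot_xor signr_addb !signr_odd. Qed.

Lemma sign_xorl w u y :
  (-1 : C) ^+ dot (bxor w u) y = (-1) ^+ dot w y * (-1) ^+ dot u y.
Proof. by rewrite dotC sign_xor dotC (dotC u). Qed.

Lemma dot0 w : dot w (bzero n) = 0%N.
Proof. by apply: big1 => j _; rewrite ffunE andbF. Qed.

Lemma dot0l w : dot (bzero n) w = 0%N.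
Proof. by rewrite dotC dot0. Qed.

Definition ej (j : 'I_n) : bits := [ffun i => i == j].

Lemma dot_ej w j : dot w (ej j) = w j.
Proof.
rewrite /dot (bigD1 j) //= ffunE eqxx andbT big1 ?addn0 // => i /negbTE ne.
by rewrite ffunE ne andbF.
Qed.

Lemma i4 : ('i : C) ^+ 4 = 1.
Proof. by rewrite (exprM _ 2 2) sqrCi sqrrN expr1n. Qed.

Lemma ipow_mod k : ('i : C) ^+ (k %% 4) = 'i ^+ k.
Proof. by rewrite {2}(divn_eq k 4) exprD mulnC exprM i4 expr1n mul1r. Qed.

Lemma ipow_inv k : ('i : C) ^+ k * 'i ^+ (3 * k) = 1.
Proof. by rewrite -exprD -{1}(mul1n k) -mulnDl exprM i4 expr1n. Qed.

Lemma sign_ipow m : (-1 : C) ^+ m = 'i ^+ (2 * m).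
Proof. by rewrite exprM sqrCi. Qed.

Lemma ipow_conj k : (('i : C) ^+ k)^* = 'i ^+ (3 * k).
Proof.
by rewrite rmorphXn /= conjCi exprM; congr (_ ^+ _); rewrite exprS sqrCi mulrN1.
Qed.

Lemma ipow_neq0 k : ('i : C) ^+ k != 0.
Proof. by rewrite expf_neq0 // neq0Ci. Qed.

Lemma ipow_mul_conj k : ('i : C) ^+ k * ('i ^+ k)^* = 1.
Proof. by rewrite ipow_conj ipow_inv. Qed.

Lemma two_neq0 : (2 : C) != 0.
Proof. by rewrite pnatr_eq0. Qed.

Lemma m1_neq1 : (-1 : C) != 1.
Proof.
apply/negP => /eqP h; move: two_neq0.
have -> : (2 : C) = 1 + 1 by []. by rewrite -{1}h addNr eqxx.
Qed.

Lemma ipow_eq1 k : (k < 4)%N -> ('i : C) ^+ k = 1 -> k = 0%N.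
Proof.
case: k => [|[|[|[|//]]]] // _.
- rewrite expr1 => h; have := sqrCi C; rewrite h expr1n => /eqP.
  by rewrite eq_sym (negbTE m1_neq1).
- by rewrite sqrCi => /eqP; rewrite (negbTE m1_neq1).
- rewrite exprS sqrCi mulrN1 => /eqP; rewrite eqr_oppLR => /eqP h.
  have := sqrCi C; rewrite h sqrrN expr1n => /eqP.
  by rewrite eq_sym (negbTE m1_neq1).
Qed.

Lemma ipow_inj (a b : 'I_4) : ('i : C) ^+ a = 'i ^+ b -> a = b.
Proof.
wlog le : a b / (a <= b)%N => [hw|].
  by case: (leqP a b) => [|/ltnW] h e; [exact: hw|apply/esym/hw].
move=> e; have : ('i : C) ^+ (b - a) = 1.
  apply: (mulfI (ipow_neq0 a)); by rewrite -exprD subnKC // mulr1 e.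
move/ipow_eq1; rewrite (leq_ltn_trans (leq_subr _ _) (ltn_ord b)) => /(_ isT) h.
by apply/val_inj/eqP; rewrite /= eqn_leq le /= -subn_eq0 h.
Qed.

Lemma pauli_app k v w (psi : qstate) x :
  opapp (pauli C k v w) psi x = 'i ^+ k * (-1) ^+ dot w (bxor x v) * psi (bxor x v).
Proof.
rewrite /opapp; under eq_bigr do rewrite pauliE bxor_eq.
rewrite -(sum_delta (bxor x v) (fun y => 'i ^+ k * (-1) ^+ dot w y * psi y)).
by apply: eq_bigr => y _; rewrite -!mulrA mulrCA.
Qed.

Definition pk (p : 'I_4 * bits * bits) : qop := pauli C p.1.1 p.1.2 p.2.

Lemma m1pow_b (b : bool) : (-1 : C) ^+ b = if b then -1 else 1.
Proof. by case: b; rewrite ?expr1 ?expr0. Qed.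

Lemma pauli_inj p q : pk p = pk q -> p = q.
Proof.
case: p => [[k v] w]; case: q => [[k' v'] w'] /= e.
have e1 : pk (k, v, w) v (bzero n) = pk (k', v', w') v (bzero n) by rewrite e.
rewrite /pk /= !pauliE !bxor0l !dot0 !expr0 !mulr1 eqxx mulr1 in e1.
have ev : v = v'.
  apply/eqP; apply/negP => /negP/negbTE ne; move: e1; rewrite ne mulr0 => /eqP.
  by rewrite (negbTE (ipow_neq0 _)).
subst v'; rewrite eqxx mulr1 in e1; have ek := @ipow_inj _ _ e1; subst k'.
congr (_, _, _); apply/ffunP => j.
have e2 : pk (k, v, w) (bxor (ej j) v) (ej j) = pk (k, v, w') (bxor (ej j) v) (ej j)
  by rewrite e.
rewrite /pk /= !pauliE eqxx mulr1 in e2.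
have := mulfI (ipow_neq0 _) e2; rewrite !dot_ej !m1pow_b.
case: (w j); case: (w' j) => //= /eqP; rewrite ?(negbTE m1_neq1) //.
by rewrite eq_sym (negbTE m1_neq1).
Qed.

Lemma pauli_mod4 k v w : pauli C k v w = pk (inord (k %% 4), v, w).
Proof.
apply: funext2 => x y; rewrite /pk /= !pauliE inordK ?ipow_mod //.
by rewrite ltn_pmod.
Qed.

Lemma clifford_adj (U : qop) : clifford U -> clifford (opadj U).
Proof.
move=> [uU hU]; split.
  by split => x y; rewrite opadjK ?unitary_adj ?unitary_adj'.
pose cj A := opmul (opmul U A) (opadj U).
have cjK A : opmul (opmul (opadj U) (cj A)) U = A.
  have -> : opmul (opmul (opadj U) (cj A)) U
    = opmul (opmul (opmul (opadj U) U) A) (opmul (opadj U) U) by rewrite /cj !opmulA.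
  by rewrite unitary_adj // opmul1l opmul1r.
have hF : forall p, exists q, cj (pk p) = pk q.
  move=> [[k v] w]; have [k' [v' [w' /funext2 e]]] := hU k v w.
  by exists (inord (k' %% 4), v', w'); rewrite /cj e pauli_mod4.
have [F hFe] := fin_all_exists hF.
have injF : injective F.
  move=> p q e; apply: pauli_inj; by rewrite -(cjK (pk p)) -(cjK (pk q)) !hFe e.
have [G FG GF] := injF_bij injF.
move=> k v w; pose p := (inord (k %% 4) : 'I_4, v, w).
exists (G p).1.1, (G p).1.2, (G p).2 => x y; rewrite opadjK pauli_mod4 -/p.
have e : pk p = cj (pk (G p)) by rewrite hFe GF.
by rewrite e cjK.
Qed.

Definition e0 : qstate := basis_state C (bzero n).
Definition Zs (s : bits) : qop := pauli C 0 (bzero n) s.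
Definition Nb : C := #|{: bits}|%:R.

Lemma Nb_neq0 : Nb != 0.
Proof. by rewrite /Nb pnatr_eq0 -lt0n card_ffun card_bool card_ord expn_gt0. Qed.

Lemma sgn_sq m : (-1 : C) ^+ m * (-1) ^+ m = 1.
Proof. by rewrite -exprD addnn -mul2n exprM sqrrN expr1n expr1n. Qed.

Lemma charsum y :
  \sum_s (-1 : C) ^+ dot s y = if y == bzero n then Nb else 0.
Proof.
case: eqP => [->|ny].
  under eq_bigr do rewrite dot0 expr0.
  by rewrite sumr_const.
case: (pickP (fun j => y j)) => [j yj|h]; last first.
  by case: ny; apply/ffunP => j; rewrite ffunE; apply/negbTE/negbT/h.
set S := \sum_s _.
have eS : S = - S.
  have hinj : injective (fun s => bxor s (ej j)) by apply: (can_inj (g := fun s => bxor s (ej j))) => s; rewrite bxorK.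
  rewrite {1}/S (reindex_inj hinj) /=.
  under eq_bigr do rewrite sign_xorl (dotC (ej j)) dot_ej yj expr1 mulrN1.
  by rewrite sumrN.
have : 2 * S = 0 by rewrite mulr2n mulrDl mul1r {1}eS addNr.
by move/eqP; rewrite mulf_eq0 (negbTE two_neq0) /= => /eqP.
Qed.

Lemma Zs_e0 s : opapp (Zs s) e0 = e0.
Proof.
apply: functional_extensionality => x; rewrite pauli_app !bxor0 /e0 /basis_state.
by case: eqP => [->|]; rewrite ?dot0 ?expr0 ?mulr0 ?mul1r.
Qed.

Lemma opmul_sum (F : bits -> qop) (A B : qop) x y :
  \sum_s opmul (opmul A (F s)) B x y
  = opmul (opmul A (fun z z' => \sum_s F s z z')) B x y.
Proof.
rewrite /opmul exchange_big; apply: eq_bigr => z' _; rewrite -mulr_suml.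
congr (_ * _); rewrite exchange_big; apply: eq_bigr => z _.
by rewrite mulr_sumr.
Qed.

Lemma sumZ z z' : \sum_s Zs s z z' = (z == z')%:R * ((z' == bzero n)%:R * Nb).
Proof.
under eq_bigr do rewrite /Zs pauliE expr0 mul1r bxor0.
by rewrite -mulr_sumr charsum; case: (z' == bzero n); rewrite ?mul1r ?mul0r.
Qed.

Lemma stab_psiE (U : qop) x : opapp U e0 x = U x (bzero n).
Proof. by rewrite /opapp /e0 /basis_state sum_delta'. Qed.

Lemma stab_sum (U : qop) x y :
  \sum_s opmul (opmul U (Zs s)) (opadj U) x y
  = Nb * opapp U e0 x * (opapp U e0 y)^*.
Proof.
rewrite opmul_sum /opmul !stab_psiE.
under eq_bigr do under eq_bigr do rewrite sumZ mulrCA.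
under eq_bigr do rewrite sum_deltaC.
rewrite (bigD1 (bzero n)) //= big1 ?addr0; first by rewrite eqxx mul1r /opadj; ring.
by move=> z /negbTE ->; rewrite mul0r mulr0 mul0r.
Qed.

Lemma stab_nonzero (U : qop) : clifford U -> exists t, opapp U e0 t != 0.
Proof.
move=> [uU _]; case: (pickP (fun t => opapp U e0 t != 0)) => [t h|h]; first by exists t.
have : opapp (opadj U) (opapp U e0) (bzero n) = 1.
  by rewrite -opappM unitary_adj // opapp1 /e0 /basis_state eqxx.
rewrite /opapp big1 => [/eqP|y _]; first by rewrite eq_sym oner_eq0.
by move: (h y) => /negbFE /eqP; rewrite /opapp => ->; rewrite mulr0.
Qed.

Lemma stab_S2 (U : qop) : clifford U ->
  forall x y, opapp U e0 x != 0 -> opapp U e0 y != 0 ->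
  exists k w, forall z, opapp U e0 (bxor z (bxor x y))
                        = 'i ^+ k * (-1) ^+ dot w z * opapp U e0 z.
Proof.
move=> [uU hU] x y hx hy; set psi := opapp U e0.
have hs := stab_sum U x y.
case: (pickP (fun s => opmul (opmul U (Zs s)) (opadj U) x y != 0)) => [s hss|h]; last first.
  move: hs; rewrite big1 => [/esym/eqP|s _]; last by apply/eqP/negbFE/h.
  by rewrite !mulf_eq0 (negbTE Nb_neq0) (negbTE hx) conjC_eq0 (negbTE hy).
have [k [v [w /funext2 e]]] := hU 0%N (bzero n) s; rewrite -/(Zs s) in e.
have hxy : x = bxor y v.
  by move: hss; rewrite e pauliE; case: (x =P bxor y v) => // _; rewrite mulr0 mul0r eqxx.
have hst : opapp (pauli C k v w) psi = psi.
  by rewrite -e !opappM -(opappM (opadj U)) unitary_adj // opapp1 Zs_e0.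
have -> : bxor x y = v by rewrite hxy bxorC bxorA bxorxx bxor0l.
exists (3 * k + 2 * dot w v)%N, w => z.
have hz : psi z = 'i ^+ k * (-1) ^+ dot w (bxor z v) * psi (bxor z v).
  by rewrite -{1}hst pauli_app.
rewrite hz sign_xor exprD -sign_ipow.
have h1 := ipow_inv k; have h2 := sgn_sq (dot w z); have h3 := sgn_sq (dot w v).
set a := 'i ^+ k in h1 *; set b := 'i ^+ (3 * k) in h1 *.
set c := (-1) ^+ dot w z in h2 *; set d := (-1) ^+ dot w v in h3 *.
transitivity ((a * b) * (c * c) * (d * d) * psi (bxor z v)); last by ring.
by rewrite h1 h2 h3 !mul1r.
Qed.

Local Notation F2 := 'F_2.

Lemma F2_cases (x : F2) : x = 0 \/ x = 1.
Proof. case: x => [[|[|//]]] ? ; [left|right]; exact/val_inj. Qed.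

Lemma F2_nat m : (m%:R : F2) = (odd m)%:R.
Proof.
elim: m => // m IH; rewrite -[m.+1]addn1 natrD IH oddD /=.
by case: (odd m) => /=; exact/val_inj.
Qed.

Lemma b2F_inj (a b : bool) : (a%:R : F2) = b%:R -> a = b.
Proof. by case: a; case: b => // /(congr1 val). Qed.

Lemma b2F_xor (a b : bool) : ((a (+) b)%:R : F2) = a%:R + b%:R.
Proof. by case: a; case: b => //=; apply/val_inj. Qed.

Lemma b2F_neq0 (a : bool) : ((a%:R : F2) != 0) = a.
Proof. by case: a. Qed.

Definition vec (x : bits) : 'rV[F2]_n := \row_j ((x j)%:R).
Definition unvec (r : 'rV[F2]_n) : bits := [ffun j => r 0 j != 0].

Lemma vecK : cancel vec unvec.
Proof. by move=> x; apply/ffunP => j; rewrite ffunE mxE b2F_neq0. Qed.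

Lemma unvecK : cancel unvec vec.
Proof.
move=> r; apply/rowP => j; rewrite mxE ffunE.
by case: (F2_cases (r 0 j)) => ->.
Qed.

Lemma vec_xor x y : vec (bxor x y) = vec x + vec y.
Proof. by apply/rowP => j; rewrite !mxE ffunE b2F_xor. Qed.

Lemma vec0 : vec (bzero n) = 0.
Proof. by apply/rowP => j; rewrite !mxE ffunE. Qed.

Lemma unvec_add r s : unvec (r + s) = bxor (unvec r) (unvec s).
Proof. by apply: (can_inj vecK); rewrite vec_xor !unvecK. Qed.

Lemma unvec0 : unvec 0 = bzero n.
Proof. by rewrite -vec0 vecK. Qed.

Definition fA (A : 'M[F2]_n) (x : bits) : bits := unvec (vec x *m A).

Lemma fA_xor A a b : fA A (bxor a b) = bxor (fA A a) (fA A b).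
Proof. by rewrite /fA vec_xor mulmxDl unvec_add. Qed.

Lemma fA0 A : fA A (bzero n) = bzero n.
Proof. by rewrite /fA vec0 mul0mx unvec0. Qed.

Lemma fAM A B x : fA (A *m B) x = fA B (fA A x).
Proof. by rewrite /fA unvecK mulmxA. Qed.

Lemma fA1 x : fA 1%:M x = x.
Proof. by rewrite /fA mulmx1 vecK. Qed.

Lemma fAK A : A \in unitmx -> cancel (fA A) (fA (invmx A)).
Proof. by move=> uA x; rewrite -fAM mulmxV // fA1. Qed.

Lemma fAKV A : A \in unitmx -> cancel (fA (invmx A)) (fA A).
Proof. by move=> uA x; rewrite -fAM mulVmx // fA1. Qed.

Lemma odd_dot_vec w y : ((odd (dot w y))%:R : F2) = (vec y *m (vec w)^T) 0 0.
Proof.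
rewrite -F2_nat /dot natr_sum !mxE; apply: eq_bigr => j _.
by rewrite !mxE -natrM mulnb andbC.
Qed.

Lemma fA_dual B w : exists w', forall z, odd (dot w (fA B z)) = odd (dot w' z).
Proof.
exists (unvec (vec w *m B^T)) => z; apply: b2F_inj.
by rewrite !odd_dot_vec /fA !unvecK trmx_mul trmxK mulmxA.
Qed.

Definition permop (f : bits -> bits) : qop := fun x y => (x == f y)%:R.

Lemma permop_app f g (psi : qstate) x :
  cancel f g -> cancel g f -> opapp (permop f) psi x = psi (g x).
Proof.
move=> fK gK; rewrite /opapp /permop.
under eq_bigr => y _ do rewrite -(can2_eq gK fK).
by rewrite sum_delta.
Qed.

Lemma permop_clifford f g :
  cancel f g -> cancel g f -> (forall a b, f (bxor a b) = bxor (f a) (f b)) ->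
  (forall w, exists w', forall z, odd (dot w (g z)) = odd (dot w' z)) ->
  clifford (permop f).
Proof.
move=> fK gK fD hd; split.
  split => x y; rewrite /opmul /opadj /permop /opid.
    under eq_bigr => z _ do rewrite conjC_nat -(can2_eq gK fK).
    by rewrite sum_delta gK eq_sym.
  under eq_bigr => z _ do rewrite conjC_nat.
  by rewrite sum_deltaC (inj_eq (can_inj fK)).
move=> k v w; have [w' hw] := hd w.
exists k, (f v), w' => x y; rewrite /opmul /opadj /permop.
under eq_bigr => z' _ do under eq_bigr => z _ do rewrite -(can2_eq gK fK).
under eq_bigr => z' _ do rewrite sum_delta conjC_nat -(can2_eq gK fK).
under eq_bigr => z' _ do rewrite eq_sym.
rewrite sum_delta' !pauliE -signr_odd hw signr_odd.
by rewrite (can2_eq gK fK) fD gK.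
Qed.

Definition diagop (om : bits -> C) : qop := fun x y => (x == y)%:R * om x.

Lemma diagop_app om (psi : qstate) x : opapp (diagop om) psi x = om x * psi x.
Proof.
rewrite /opapp /diagop; under eq_bigr do rewrite -mulrA.
by rewrite sum_delta.
Qed.

Lemma diagop_clifford om :
  (forall z, exists m, om z = 'i ^+ m) ->
  (forall v, exists m u, forall z, om (bxor z v) * (om z)^* = 'i ^+ m * (-1) ^+ dot u z) ->
  clifford (diagop om).
Proof.
move=> hph htr.
have hn z : om z * (om z)^* = 1 by have [m ->] := hph z; exact: ipow_mul_conj.
split.
  split => x y; rewrite /opmul /opadj /diagop /opid.
    under eq_bigr do rewrite rmorphM rmorph_nat /= mulrAC -!mulrA.
    rewrite sum_delta eq_sym; case: (x =P y) => [->|ne]; first by rewrite ?eqxx /= mul1r mulrC hn.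
    by rewrite mul0r.
  under eq_bigr do rewrite rmorphM rmorph_nat /= -mulrA.
  rewrite sum_deltaC; case: (x =P y) => [->|ne]; first by rewrite mul1r mulrC hn.
  by rewrite mul0r mulr0.
move=> k v w; have [m [u hu]] := htr v.
exists (k + m)%N, v, (bxor w u) => x y; rewrite /opmul /opadj /diagop.
under eq_bigr do under eq_bigr do rewrite -mulrA.
under eq_bigr do rewrite sum_delta rmorphM rmorph_nat /= mulrCA.
rewrite sum_delta !pauliE sign_xorl.
case: (x =P bxor y v) => [->|ne]; last first.
  by rewrite /=; ring.
have -> : (true%:R : C) = 1 by [].
have := hu y; rewrite exprD => h.
transitivity ('i ^+ k * ((om (bxor y v) * (om y)^*)) * (-1) ^+ dot w y); first by ring.
by rewrite h; ring.
Qed.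

Definition Lc (c : nat) (z : bits) := [forall j : 'I_n, (j < n - c)%N ==> ~~ z j].

Lemma fA_id_eq1 (B : 'M[F2]_n) : (forall x, fA B x = x) -> B = 1%:M.
Proof.
move=> h; apply/row_matrixP => i.
have e : delta_mx 0 i = vec (ej i).
  by apply/rowP => k; rewrite !mxE ffunE eqxx /= eq_sym.
by rewrite !rowE mulmx1 e -[vec (ej i) *m B]unvecK -/(fA B (ej i)) h.
Qed.

Lemma fA_invol_unit (B : 'M[F2]_n) : (forall x, fA B (fA B x) = x) -> B \in unitmx.
Proof.
move=> h; have e : B *m B = 1%:M by apply: fA_id_eq1 => x; rewrite fAM h.
by case: (mulmx1_unit e).
Qed.

Definition TV (j : 'I_n) (u : bits) : 'M[F2]_n :=
  1%:M + \matrix_(i, k) ((i == j)%:R * (u k)%:R).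

Lemma fA_TV (j : 'I_n) (u x : bits) : fA (TV j u) x = [ffun k => x k (+) (x j && u k)].
Proof.
apply/ffunP => k; rewrite /fA /TV mulmxDr mulmx1 !ffunE !mxE.
rewrite (bigD1 j) //= big1 ?addr0 => [|i /negbTE ne]; last by rewrite !mxE ne mul0r mulr0.
rewrite !mxE eqxx mul1r -natrM mulnb.
by case: (x k); case: (x j && u k) => /=.
Qed.

Lemma TV_invol (j : 'I_n) (u x : bits) : u j = false -> fA (TV j u) (fA (TV j u) x) = x.
Proof.
move=> uj; apply/ffunP => k; rewrite !fA_TV !ffunE uj.
by case: (x k); case: (x j); case: (u k).
Qed.

Lemma TV_unit (j : 'I_n) (u : bits) : u j = false -> TV j u \in unitmx.
Proof. by move=> uj; apply: fA_invol_unit => x; exact: TV_invol. Qed.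

Lemma TV_Lc c (j : 'I_n) (u x : bits) : (j < n - c)%N -> u j = false ->
  Lc c (fA (TV j u) x) = Lc c x.
Proof.
move=> hj uj.
have fix_ (z : bits) : z j = false -> fA (TV j u) z = z.
  by move=> zj; apply/ffunP => k; rewrite fA_TV ffunE zj addbF.
apply/idP/idP => h.
  have zj : fA (TV j u) x j = false by move/forallP: h => /(_ j); rewrite hj => /negbTE.
  have : x j = false by move: zj; rewrite fA_TV ffunE uj andbF addbF.
  by move=> xj; move: h; rewrite fix_.
have xj : x j = false by move/forallP: h => /(_ j); rewrite hj => /negbTE.
by rewrite fix_.
Qed.

Lemma to_e0 c (y : bits) (j0 i0 : 'I_n) : val i0 = 0%N -> (j0 < n - c)%N -> y j0 ->
  exists B, [/\ B \in unitmx, forall x, Lc c (fA B x) = Lc c x & fA B y = ej i0].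
Proof.
move=> hi0 hj0 yj0.
have hi0c : (i0 < n - c)%N by rewrite hi0; apply: leq_ltn_trans hj0.
have [T1 [uT1 LT1 yT1]] : exists T1, [/\ T1 \in unitmx, forall x, Lc c (fA T1 x) = Lc c x
                                     & fA T1 y i0].
  case yi0 : (y i0).
    exists 1%:M; split; [exact: unitmx1 | by move=> x; rewrite fA1 | by rewrite fA1].
  have ne : (ej i0) j0 = false.
    rewrite ffunE; apply/negbTE/eqP => e; by rewrite e yi0 in yj0.
  exists (TV j0 (ej i0)); split; first exact: TV_unit.
    by move=> x; apply: TV_Lc.
  by rewrite fA_TV !ffunE yi0 yj0 eqxx.
have [y1 ey1] : exists y1, fA T1 y = y1 by eexists.
rewrite ey1 in yT1.
have u0 : (bxor y1 (ej i0)) i0 = false.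
  by rewrite /bxor ffunE yT1 /ej ffunE eqxx.
exists (T1 *m TV i0 (bxor y1 (ej i0))); split.
- by rewrite unitmx_mul uT1 TV_unit.
- by move=> x; rewrite fAM TV_Lc // LT1.
rewrite fAM ey1; apply/ffunP => k; rewrite fA_TV !ffunE yT1 /=.
by case: (y1 k); case: (k == i0).
Qed.

Definition Rv : 'M[F2]_n := \matrix_(i, j) (i == rev_ord j)%:R.

Lemma fA_Rv x : fA Rv x = [ffun j => x (rev_ord j)].
Proof.
apply/ffunP => j; rewrite /fA !ffunE mxE (bigD1 (rev_ord j)) //= big1 ?addr0.
  by rewrite !mxE eqxx mulr1 b2F_neq0.
by move=> i /negbTE ne; rewrite !mxE ne mulr0.
Qed.

Lemma Rv_unit : Rv \in unitmx.
Proof.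
apply: fA_invol_unit => x; apply/ffunP => j; rewrite !fA_Rv !ffunE.
by rewrite rev_ordK.
Qed.

Lemma subspace_std (V : pred bits) : V (bzero n) ->
  (forall a b, V a -> V b -> V (bxor a b)) ->
  exists A c, [/\ A \in unitmx, (c <= n)%N & forall x, V x = Lc c (fA A x)].
Proof.
move=> V0 VD; set m := #|{: bits}|.
pose M : 'M[F2]_(m, n) :=
  \matrix_(i, j) (if V (enum_val i) then vec (enum_val i) 0 j else 0).
have rowM i : row i M = if V (enum_val i) then vec (enum_val i) else 0.
  by apply/rowP => j; rewrite !mxE; case: (V _); rewrite ?mxE.
have memM x : V x <-> exists u, vec x = u *m M.
  split => [Vx|[u e]].
    exists (delta_mx 0 (enum_rank x)); by rewrite -rowE rowM enum_rankK Vx.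
  rewrite -[x]vecK e mulmx_sum_row.
  apply: (big_ind (fun r => V (unvec r))); first by rewrite unvec0.
    by move=> r s hr hs; rewrite unvec_add; apply: VD.
  move=> i _; rewrite rowM; case: (F2_cases (u 0 i)) => ->.
    by rewrite scale0r unvec0.
  by rewrite scale1r; case Vi: (V (enum_val i)); rewrite ?vecK ?unvec0.
set E := row_ebase M; set r := \rank M; set CE := col_ebase M.
have uE : E \in unitmx by exact: row_ebase_unit.
have uCE : CE \in unitmx by exact: col_ebase_unit.
have rm : (r <= m)%N by exact: rank_leq_row.
have rn : (r <= n)%N by exact: rank_leq_col.
have key x : V x <-> (forall j : 'I_n, (r <= j)%N -> (vec x *m invmx E) 0 j = 0).
  rewrite memM; split => [[u e] j hj|h].
    rewrite e -{1}(mulmx_ebase M) -/E -/r -/CE !mulmxA mulmxK //.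
    rewrite !mxE big1 // => i _; rewrite !mxE.
    case: eqP => [ei|]; last by rewrite mulr0.
    by rewrite /= ei ltnNge hj mulr0.
  set y := vec x *m invmx E in h.
  exists (y *m (pid_mx r : 'M_(n, m)) *m invmx CE).
  rewrite -{1}(mulmx_ebase M) -/E -/r -/CE !mulmxA mulmxKV //.
  rewrite -(mulmxA y) mul_pid_mx minnn (minn_idPr rm).
  have -> : y *m pid_mx r = y.
    apply/rowP => j; rewrite !mxE (bigD1 j) //= big1 ?addr0.
      rewrite !mxE eqxx /=; case: ltnP => hj; first by rewrite mulr1.
      rewrite mulr0; symmetry; have := h j hj; by rewrite /y mxE.
    by move=> i ne; rewrite !mxE val_eqE (negbTE ne) mulr0.
  by rewrite /y mulmxKV.
exists (invmx E *m Rv), r; split.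
- by rewrite unitmx_mul unitmx_inv uE Rv_unit.
- exact: rn.
move=> x; apply/idP/idP => [/key h|h].
  apply/forallP => j; apply/implyP => hj.
  rewrite fAM fA_Rv ffunE /fA ffunE h ?eqxx //=.
  move: (ltn_ord j); lia.
apply/key => j hj.
move/forallP: h => /(_ (rev_ord j)); rewrite fAM fA_Rv ffunE rev_ordK /fA ffunE.
have -> : (rev_ord j < n - r)%N by rewrite /=; move: (ltn_ord j); lia.
by rewrite /= negbK => /eqP.
Qed.

Definition inR (a b : nat) (z : bits) :=
  [forall j : 'I_n, (j < a + b)%N ==> (z j == (j < a)%N)].

Lemma geometry (S : pred bits) t : S t ->
  (forall x y z, S x -> S y -> S z -> S (bxor z (bxor x y))) ->
  exists A a b, [/\ A \in unitmx, (a <= 1)%N, (a + b <= n)%N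
                  & forall x, S x = inR a b (fA A x)].
Proof.
move=> St hS.
pose V := fun v => S (bxor t v).
have V0 : V (bzero n) by rewrite /V bxor0.
have VD a b : V a -> V b -> V (bxor a b).
  move=> ha hb; have := hS _ _ _ ha St hb; rewrite /V.
  have -> : bxor (bxor t b) (bxor (bxor t a) t) = bxor t (bxor a b).
    by apply/ffunP=> j; rewrite !ffunE; case: (t j); case: (a j); case: (b j).
  done.
have [A [c [uA cn hV]]] := @subspace_std V V0 VD.
have SV x : S x = V (bxor t x) by rewrite /V bxorA bxorxx bxor0l.
case S0 : (S (bzero n)).
  have Vt : V t by rewrite /V bxorxx.
  exists A, 0%N, (n - c)%N; split => //; first by rewrite add0n leq_subr.
  move=> x; rewrite SV.
  have -> : V (bxor t x) = V x.
    apply/idP/idP => h; last exact: VD.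
    by have := VD _ _ Vt h; rewrite bxorA bxorxx bxor0l.
  rewrite hV /Lc /inR; apply: eq_forallb => j; rewrite add0n.
  by case: (j < n - c)%N; case: (fA A x j).
have Lt : Lc c (fA A t) = false by rewrite -hV /V bxorxx S0.
move/negbT: Lt => /forallPn [j0]; rewrite negb_imply negbK => /andP [hj0 yj0].
have hi : (0 < n)%N by apply: leq_ltn_trans (ltn_ord j0).
pose i0 := Ordinal hi.
have [B [uB LB eB]] := @to_e0 c (fA A t) j0 i0 (erefl _) hj0 yj0.
exists (A *m B), 1%N, (n - c - 1)%N; split.
- by rewrite unitmx_mul uA uB.
- done.
- by move: hj0 (ltn_ord j0); lia.
move=> x; rewrite SV hV fA_xor -LB fA_xor eB fAM.
rewrite /Lc /inR; apply: eq_forallb => j.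
have -> : (1 + (n - c - 1) = n - c)%N by move: hj0 (ltn_ord j0); lia.
have -> : (j < 1)%N = (j == i0) by rewrite -val_eqE /= ltnS leqn0.
rewrite !ffunE.
by case: (j < n - c)%N; case: (j == i0); case: (_ != 0).
Qed.

Lemma prod_stateE a b x :
  prod_state C a b x = (inR a b x)%:R *
    \prod_(j < n) (if (j < a + b)%N then 1 else (sqrtC (2 : C))^-1).
Proof.
rewrite /prod_state; case hR : (inR a b x).
  rewrite mul1r; apply: eq_bigr => j _.
  move/forallP: hR => /(_ j) /implyP h.
  case: ifP => ha.
    have hab : (j < a + b)%N by apply: leq_trans (leq_addr _ _).
    by rewrite hab; move: (h hab); rewrite ha => /eqP ->.
  case: ifP => hb //.
  by move: (h hb); rewrite ha => /eqP ->.
rewrite mul0r; move/negbT: hR => /forallPn [j]; rewrite negb_imply => /andP [hj hne].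
rewrite (bigD1 j) //=; case: ifP => ha.
  by move: hne; rewrite ha; case: (x j) => //= _; rewrite mul0r.
by rewrite hj; move: hne; rewrite ha; case: (x j) => //= _; rewrite mul0r.
Qed.

Lemma prod_const_neq0 a b :
  \prod_(j < n) (if (j < a + b)%N then 1 else (sqrtC (2 : C))^-1) != 0.
Proof.
rewrite prodf_seq_neq0; apply/allP => j _; apply/implyP => _.
case: ifP => _; first exact: oner_neq0.
by rewrite invr_eq0 sqrtC_eq0 two_neq0.
Qed.

Definition r0 (a : nat) : bits := [ffun j : 'I_n => (j < a)%N].

Lemma div_ipow (p : C) m : p != 0 -> p / ('i ^+ m * p) = 'i ^+ (3 * m).
Proof.
move=> p0; rewrite invfM mulrCA divff // mulr1.
apply: (mulfI (ipow_neq0 m)); rewrite divff ?ipow_neq0 //.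
by rewrite ipow_inv.
Qed.

Lemma dstep (psi : qstate) a b :
  (forall x y, psi x != 0 -> psi y != 0 -> exists k w, forall z,
      psi (bxor z (bxor x y)) = 'i ^+ k * (-1) ^+ dot w z * psi z) ->
  (forall x, (psi x != 0) = inR a b x) ->
  exists om, [/\ clifford (diagop om), om (bzero n) = 1
               & forall x, om x * psi x = (inR a b x)%:R * psi (r0 a)].
Proof.
move=> hS hR.
pose pi (z : bits) : bits := [ffun j : 'I_n => if (j < a + b)%N then (j < a)%N else z j].
pose mask (z : bits) : bits := [ffun j : 'I_n => ~~ (j < a + b)%N && z j].
have highF (j : 'I_n) : (j < a + b)%N = false -> (j < a)%N = false.
  by move=> h; apply/negbTE; move/negbT: h; lia.
have hpiR z : inR a b (pi z).
  by apply/forallP => j; apply/implyP => hj; rewrite ffunE hj.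
have r0R : inR a b (r0 a).
  by apply/forallP => j; apply/implyP => hj; rewrite ffunE.
have hpi_xor z v : pi (bxor z v) = bxor (pi z) (mask v).
  by apply/ffunP => j; rewrite !ffunE; case: (j < a + b)%N; rewrite ?addbF.
have hpi_r0 z : pi z = bxor (r0 a) (mask z).
  apply/ffunP => j; rewrite !ffunE; case hj: (j < a + b)%N; rewrite ?addbF //=.
  by rewrite highF.
have pi0 : pi (bzero n) = r0 a.
  apply/ffunP => j; rewrite !ffunE; case hj: (j < a + b)%N => //.
  by rewrite highF.
have piR z : inR a b z -> pi z = z.
  move=> /forallP h; apply/ffunP => j; rewrite ffunE.
  by case hj: (j < a + b)%N => //; move/implyP: (h j) => /(_ hj) /eqP.
have hpsi z : psi (pi z) != 0 by rewrite hR hpiR.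
have hr0 : psi (r0 a) != 0 by rewrite hR.
have dmask w z : dot w (mask z) = dot (mask w) z.
  by rewrite /dot; apply: eq_bigr => j _; rewrite !ffunE andbCA andbA.
pose om z := psi (r0 a) / psi (pi z).
have hph z : exists m, om z = 'i ^+ m.
  have [k [w hk]] := hS _ _ (hpsi z) hr0.
  have := hk (r0 a); rewrite bxorA bxorC bxorA bxorxx bxor0l => e.
  exists (3 * (k + 2 * dot w (r0 a)))%N; rewrite /om e sign_ipow -exprD.
  exact: div_ipow.
have conj_om z : (om z)^* = (om z)^-1.
  have [m ->] := hph z; rewrite ipow_conj.
  by apply: (mulfI (ipow_neq0 m)); rewrite divff ?ipow_neq0 // ipow_inv.
exists om; split.
- apply: diagop_clifford => // v.
  have [k [w hk]] := hS _ _ (hpsi v) hr0.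
  have emv : bxor (pi v) (r0 a) = mask v.
    by rewrite hpi_r0 bxorC bxorA bxorxx bxor0l.
  rewrite emv in hk.
  exists (3 * (k + 2 * dot w (r0 a)))%N, (mask w) => z.
  have e := hk (pi z); rewrite -hpi_xor in e.
  rewrite conj_om /om e [X in dot w X]hpi_r0 sign_xor dmask.
  set P := psi (pi z); set R := psi (r0 a).
  have P0 : P != 0 by exact: hpsi.
  set s := (-1) ^+ dot (mask w) z.
  have s0 : s != 0 by rewrite signr_eq0.
  have ss : s^-1 = s by rewrite /s invr_sign.
  have q0 : ('i : C) ^+ (k + 2 * dot w (r0 a)) != 0 by exact: ipow_neq0.
  have qi : (('i : C) ^+ (k + 2 * dot w (r0 a)))^-1 = 'i ^+ (3 * (k + 2 * dot w (r0 a))).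
    by apply: (mulfI q0); rewrite divff // ipow_inv.
  rewrite -qi -{2}ss exprD -sign_ipow.
  by field; rewrite ?s0 ?P0 ?hr0 ?ipow_neq0 ?signr_eq0.
- by rewrite /om pi0 divff.
move=> x; rewrite /om; case hx: (inR a b x).
  by rewrite piR // mulfVK ?hR //=; ring.
by move/negbT: hx; rewrite -hR negbK => /eqP ->; rewrite !mulr0 mul0r.
Qed.

Lemma main_sec (phi1 phi2 : qstate) :
  stabilizer_state phi1 -> stabilizer_state phi2 ->
  exists U : qop, clifford U /\
    (forall x, opapp U phi1 x = basis_state C (bzero n) x) /\
    exists (a b : nat) (c : C),
      [/\ (a <= 1)%N, (b <= n)%N, (a + b <= n)%N, c != 0 &
          forall x, opapp U phi2 x = c * prod_state C a b x].
Proof.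
move=> [U1 [cU1 h1]] [U2 [cU2 h2]].
have e1 : phi1 = opapp U1 e0 by apply: functional_extensionality.
have e2 : phi2 = opapp U2 e0 by apply: functional_extensionality.
pose W := opmul (opadj U1) U2.
have cW : clifford W by apply: clifford_mul => //; apply: clifford_adj.
pose psi := opapp W e0.
have [t ht] := stab_nonzero W cW.
have hS := stab_S2 W cW.
pose S := fun x => psi x != 0.
have hS' : forall x y z, S x -> S y -> S z -> S (bxor z (bxor x y)).
  move=> x y z hx hy hz; have [k [w hk]] := hS x y hx hy.
  by rewrite /S /psi hk !mulf_neq0 ?ipow_neq0 ?signr_eq0.
have [A [a [b [uA ha hab hA]]]] := @geometry S t ht hS'.
pose f := fA A; pose g := fA (invmx A).
have fK : cancel f g by exact: fAK.
have gK : cancel g f by exact: fAKV.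
have cP : clifford (permop f).
  apply: (@permop_clifford f g fK gK); first exact: fA_xor.
  exact: fA_dual.
pose W2 := opmul (permop f) W.
have cW2 : clifford W2 by exact: clifford_mul.
have psi2E x : opapp W2 e0 x = psi (g x) by rewrite opappM (permop_app _ _ _ _ fK gK).
have supp2 x : (opapp W2 e0 x != 0) = inR a b x.
  by rewrite psi2E -/(S (g x)) hA -/(f (g x)) gK.
have [om [cD om0 hom]] := @dstep _ a b (stab_S2 W2 cW2) supp2.
exists (opmul (diagop om) (opmul (permop f) (opadj U1))); split.
  apply: clifford_mul => //; apply: clifford_mul => //; exact: clifford_adj.
split.
  move=> x; rewrite e1 !opappM -(opappM (opadj U1)) unitary_adj; last by case: cU1.
  rewrite opapp1 diagop_app (permop_app _ _ _ _ fK gK) /e0 /basis_state.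
  case: (x =P bzero n) => [->|ne].
    by rewrite /g fA0 eqxx om0 mulr1.
  have -> : (g x == bzero n) = false.
    apply/negbTE/eqP => e; apply: ne; by rewrite -(gK x) e /f fA0.
  by rewrite /= mulr0.
set Pc := \prod_(j < n) (if (j < a + b)%N then 1 else (sqrtC (2 : C))^-1).
have Pc0 : Pc != 0 by exact: prod_const_neq0.
have hr : opapp W2 e0 (r0 a) != 0.
  rewrite supp2; apply/forallP => j; apply/implyP => _; by rewrite ffunE.
exists a, b, (opapp W2 e0 (r0 a) / Pc); split => //.
- by move: hab; lia.
- by rewrite mulf_neq0 // invr_eq0.
move=> x; rewrite e2 !opappM.
have -> : opapp (permop f) (opapp (opadj U1) (opapp U2 e0)) = opapp W2 e0.
  by rewrite /W2 /W !opappM.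
rewrite diagop_app hom prod_stateE -/Pc.
by field.
Qed.

End Main.

Theorem lemma2 (C : numClosedFieldType) (n : nat) (phi1 phi2 : qstate C n) :
  stabilizer_state phi1 -> stabilizer_state phi2 ->
  exists U : qop C n, clifford U /\
    (forall x, opapp U phi1 x = basis_state C (bzero n) x) /\
    exists (a b : nat) (c : C),
      [/\ (a <= 1)%N, (b <= n)%N, (a + b <= n)%N, c != 0 &
          forall x, opapp U phi2 x = c * prod_state C a b x].
Proof. exact: main_sec. Qed.
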